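(* There is no finite group $G$ with $\pi_e(G)\subseteq\{1,2,3,4,6\}$ having precisely four cyclic subgroups $H_1,H_2,H_3,H_4$ of order $6$ such that $|H_1\cap H_2|=3$ and $|H_3\cap H_4|=3$.
   Context: $\pi_e(G)$ is the set of orders of elements of $G$. *)

(* Defs.v *)
From mathcomp Require Import all_boot all_fingroup all_solvable.
Set Implicit Arguments. Unset Strict Implicit. Unset Printing Implicit Defensive.
Local Open Scope group_scope.

Definition elt_orders (gT : finGroupType) (G : {set gT}) : pred nat :=
  fun n => [exists x in G, #[x] == n].

(* Main.v *)
Require Import Defs.
From mathcomp Require Import all_boot all_fingroup all_solvable.
From mathcomp Require Import zify.
Local Open Scope group_scope.
Set Implicit Arguments. Unset Strict Implicit. Unset Printing Implicit Defensive.

Lemma inv_parity (T : finType) (f : T -> T) (fK : involutive f) (n : nat) (A : {set T}) :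
  #|A| <= n -> (forall x, x \in A -> f x \in A) ->
  odd #|A| = odd #|[set x in A | f x == x]|.
Proof.
elim: n A => [|n IH] A hA cA.
  have A0: A = set0 by apply/eqP; rewrite -cards_eq0 -leqn0.
  rewrite A0 (_ : [set x in set0 | _] = set0) //; by apply/setP => y; rewrite !inE.
case: (boolP [exists x in A, f x != x]) => [/existsP[x /andP[xA fx]]|].
  set B := A :\ x :\ f x.
  have eA : #|A| = #|B|.+2.
    rewrite (cardsD1 x A) xA (cardsD1 (f x) (A :\ x)) !inE fx cA //.
  have eF : [set y in A | f y == y] = [set y in B | f y == y].
    apply/setP => y; rewrite !inE; case: (eqVneq (f y) y) => fy; rewrite ?andbT ?andbF //.
    case: (eqVneq y x) => [yx|yx]; first by subst y; rewrite fy eqxx in fx.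
    case: (eqVneq y (f x)) => [yfx|yfx] //=.
    have e: x = f x by rewrite -{1}(fK x) -yfx fy.
    by rewrite -e eqxx in fx.
  rewrite eA /= negbK eF; apply: IH.
    by move: hA; rewrite eA ltnS => /ltnW.
  move=> y; rewrite !inE => /and3P[yfx yx yA].
  rewrite cA // andbT; apply/andP; split.
    by apply: contra yx => /eqP/(congr1 f); rewrite !fK => ->.
  by apply: contra yfx => /eqP <-; rewrite fK.
rewrite negb_exists => /forallP H; congr (odd _); apply: eq_card => y; rewrite !inE.
by case yA: (y \in A) => //; move: (H y); rewrite yA /= negbK.
Qed.

Lemma key (gT : finGroupType) (G : {group gT}) (L : {set {group gT}}) (x : gT) :
  x \in G -> #[x] = 3%N ->
  (forall H : {group gT}, H \in L -> [/\ H \subset G, cyclic H & #|H| = 6%N]) ->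
  (forall H : {group gT}, H \subset G -> cyclic H -> #|H| = 6%N -> H \in L) ->
  (0 < #|[set H in L | x \in H]|)%N -> odd #|[set H in L | x \in H]|.
Proof.
move=> xG ox hL hL2.
set C := 'C_G[x].
set I := [set t in C | #[t] == 2%N].
have ordtx t : t \in I -> #[t * x] = 6%N /\ commute t x.
  rewrite inE => /andP[/setIP[tG /cent1P ctx] /eqP ot].
  have ct : commute t x by [].
  by rewrite orderM // ot ox.
have eqS : [set H in L | x \in H] = [set <[t * x]>%G | t in I].
  apply/setP => H; rewrite inE; apply/andP/imsetP.
  - case=> HL xH; have [sHG cH oH] := hL H HL.
    case/cyclicP: cH => h eH.
    have oh : #[h] = 6%N by rewrite orderE -eH.
    have hH : h \in H by rewrite eH cycle_id.
    have aH : abelian H by rewrite eH cycle_abelian.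
    have cth : commute (h ^+ 3) x.
      by apply: (centsP aH); rewrite ?groupX.
    have mI : h ^+ 3 \in I.
      rewrite inE; apply/andP; split; last by rewrite orderXdiv oh.
      by apply/setIP; split; [rewrite (subsetP sHG) ?groupX | apply/cent1P].
    exists (h ^+ 3) => //.
    apply/val_inj/eqP => /=; rewrite eq_sym eqEcard.
    have [o _] := ordtx _ mI.
    by rewrite oH -orderE o leqnn andbT cycle_subG groupM ?groupX.
  - case=> t tI ->; have [o ct] := ordtx t tI.
    split; first by apply: hL2 => //=; [rewrite cycle_subG groupM //; move: tI; rewrite inE => /andP[/setIP[]]| exact: cycle_cyclic].
    rewrite -cycle_subG /= ct; apply: cycleMsub.
      by [].
    by move: tI; rewrite inE => /andP[_ /eqP ->]; rewrite ox.
have oI t : t \in I -> #[t] = 2%N by rewrite inE => /andP[_ /eqP].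
have sub t : t \in I -> <[t]> \subset <[t * x]>.
  move=> tI; have [_ ct] := ordtx t tI; apply: cycleMsub => //.
  by rewrite (oI t tI) ox.
have inj : {in I &, injective (fun t => <[t * x]>%G)}.
  move=> t s tI sI /= /(congr1 val) /= e.
  have : <[t]> :==: <[s]>.
    rewrite (eq_subG_cyclic (cycle_cyclic (s * x))); first last.
    - exact: sub.
    - by have := sub t tI; rewrite e.
    by rewrite -!orderE (oI t tI) (oI s sI).
  move/eqP => ets.
  have : t \in <[s]> by rewrite -ets cycle_id.
  case/cycleP => k tk.
  have ot := oI t tI.
  rewrite tk -expg_mod_order (oI s sI) in ot *.
  have : (k %% 2 < 2)%N by rewrite ltn_mod.
  case: (k %% 2)%N ot => [|[|//]] ot _; last by rewrite expg1.
  by rewrite expg0 order1 in ot.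
rewrite eqS card_in_imset // => pos.
have fixE : [set y in C | y^-1 == y] = 1 |: I.
  apply/setP => y; rewrite in_setU1 [y \in I]inE [in LHS]inE eq_invg_mul.
  have -> : y * y = y ^+ 2 by rewrite expgS expg1.
  rewrite -order_dvdn.
  case: (eqVneq y 1) => [->|y1] /=; first by rewrite group1 order1.
  have : #[y] != 1%N by rewrite order_eq1.
  have := order_gt0 y.
  by case: #[y] => [|[|[|n]]].
have par := @inv_parity gT invg (@invgK _) #|C| C (leqnn _) (fun y yC => groupVr yC).
rewrite fixE cardsU1 (_ : 1 \notin I) /= in par; last first.
  by rewrite inE order1 andbF.
case/card_gt0P: pos => t tI.
have : (2 %| #|C|)%N.
  rewrite -(oI t tI); apply: order_dvdG.
  by move: tI; rewrite inE => /andP[].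
by rewrite dvdn2 par negbK add0n.
Qed.

Theorem theorem3p4 (gT : finGroupType) (G : {group gT})
  (H1 H2 H3 H4 : {group gT}) :
  {subset elt_orders G <= [:: 1; 2; 3; 4; 6]%N} ->
  (forall H : {group gT}, H \in [:: H1; H2; H3; H4] ->
     [/\ H \subset G, cyclic H & #|H| = 6%N]) ->
  uniq [:: H1; H2; H3; H4] ->
  (forall H : {group gT}, H \subset G -> cyclic H -> #|H| = 6%N ->
     H \in [:: H1; H2; H3; H4]) ->
  #|H1 :&: H2| = 3%N -> #|H3 :&: H4| = 3%N -> False.
Proof.
move=> _ hL huniq hall h12 h34.
set L : {set {group gT}} := [set H in [:: H1; H2; H3; H4]].
have hL' : forall H : {group gT}, H \in L -> [/\ H \subset G, cyclic H & #|H| = 6%N].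
  by move=> H; rewrite inE; apply: hL.
have hall' : forall H : {group gT}, H \subset G -> cyclic H -> #|H| = 6%N -> H \in L.
  by move=> H ? ? ?; rewrite inE; apply: hall.
have cL : #|L| = 4%N by rewrite cardsE; apply/card_uniqP.
have inL : [/\ H1 \in L, H2 \in L, H3 \in L & H4 \in L] by rewrite !inE !eqxx ?orbT.
case: inL => L1 L2 L3 L4.
have getx (A B : {group gT}) : A \in L -> #|A :&: B| = 3%N ->
    exists x, [/\ x \in G, #[x] = 3%N, x \in A & x \in B].
  move=> AL oAB; have [sAG cA _] := hL' A AL.
  have : cyclic (A :&: B) by apply: cyclicS cA; apply: subsetIl.
  case/cyclicP => x ex.
  have xAB : x \in A :&: B by rewrite ex cycle_id.
  move: (xAB); rewrite inE => /andP[xA xB].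
  by exists x; split => //; [exact: (subsetP sAG) | rewrite orderE -ex].
have [x [xG ox x1 x2]] := getx _ _ L1 h12.
have [y [yG oy y3 y4]] := getx _ _ L3 h34.
have uniq3 (H : {group gT}) a b : H \in L -> a \in H -> b \in H -> #[a] = 3%N -> #[b] = 3%N ->
    <[a]> = <[b]>.
  move=> HL aH bH oa ob; have [_ cH _] := hL' H HL.
  by apply/eqP; rewrite (eq_subG_cyclic cH) ?cycle_subG // -!orderE oa ob.
have px := key xG ox hL' hall'.
have py := key yG oy hL' hall'.
set Sx := [set H in L | x \in H] in px *.
set Sy := [set H in L | y \in H] in py *.
have H12 : H1 != H2 by apply: contraTneq huniq => ->; rewrite /= !inE !eqxx /= ?orbT ?andbF.
have H34 : H3 != H4 by apply: contraTneq huniq => ->; rewrite /= !inE !eqxx /= ?orbT ?andbF ?andbT.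
have ge2x : (2 <= #|Sx|)%N.
  apply: (@leq_trans #|[set H1; H2]|); first by rewrite cards2 H12.
  apply: subset_leq_card.
  by apply/subsetP => H; rewrite !inE => /orP[]/eqP->; rewrite !eqxx ?orbT ?x1 ?x2.
have ge2y : (2 <= #|Sy|)%N.
  apply: (@leq_trans #|[set H3; H4]|); first by rewrite cards2 H34.
  apply: subset_leq_card.
  by apply/subsetP => H; rewrite !inE => /orP[]/eqP->; rewrite !eqxx ?orbT ?y3 ?y4.
case: (eqVneq <[x]> <[y]>) => exy.
  have : Sx = L.
    apply/setP => H; rewrite inE; case HL: (H \in L) => //=.
    move: HL; rewrite !inE => /or4P[]/eqP->; rewrite ?x1 ?x2 // -cycle_subG exy cycle_subG ?y3 ?y4 //.
  by move=> eS; move: px; rewrite eS cL => /(_ isT).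
have dis : Sx :&: Sy = set0.
  apply/setP => H; rewrite inE in_set0; apply/negP => /andP[]; rewrite !inE => /andP[HL xH] /andP[_ yH].
  have HL' : H \in L by rewrite !inE HL.
  by move/eqP: exy; apply; exact: (uniq3 H x y HL' xH yH ox oy).
have : (#|Sx| + #|Sy| <= 4)%N.
  rewrite -cL -cardsUI dis cards0 addn0; apply: subset_leq_card.
  by apply/subsetP => H; rewrite !inE => /orP[]/andP[].
have ox3 : (3 <= #|Sx|)%N.
  move: ge2x (px (ltnW ge2x)); case: #|Sx| => [|[|[|]]] //.
have oy3 : (3 <= #|Sy|)%N.
  move: ge2y (py (ltnW ge2y)); case: #|Sy| => [|[|[|]]] //.
move=> h; have := leq_add ox3 oy3; move: h; clear; lia.
Qed.
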